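(* Let $\mathrm{X},\mathrm{Y}$ be locally compact Hausdorff spaces, let $F(\mathrm{X})\subset C_0(\mathrm{X})_+$ contain sufficiently many functions to peak on compact $G_\delta$ subsets of $\mathrm{X}$, and let $T:F(\mathrm{X})\to C_0(\mathrm{Y})_+$ satisfy $\|Tf_1+\cdots+Tf_n\|=\|f_1+\cdots+f_n\|$ for all $n\in\mathbb{N}$ and $f_1,\dots,f_n\in F(\mathrm{X})$. Then for every $x_0\in\mathrm{X}$, every $f\in F(\mathrm{X})$ and every $y\in\operatorname{psupp}_T(x_0)$ we have $(Tf)(y)\le f(x_0)$.
   Context: $C_0(\mathrm{X})_+$: nonnegative continuous functions vanishing at infinity, sup-norm. $\operatorname{pk}(f)=\{x: f(x)=\|f\|\}$. $F(\mathrm{X})$ ''contains sufficiently many functions to peak on compact $G_\delta$ subsets'' if every nonempty compact $G_\delta$ set $K\subset\mathrm{X}$ equals $\operatorname{pk}(f)$ for some $f\in F(\mathrm{X})$. For $x\in\mathrm{X}$: $\operatorname{PKat}(x)=\{g\in F(\mathrm{X}): g(x)=\|g\|\}$ and $\operatorname{psupp}_T(x)=\bigcap_{h\in\operatorname{PKat}(x)}\operatorname{pk}(Th)\subset\mathrm{Y}$. *)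

(* Defs.v *)
From HB Require Import structures.
From mathcomp Require Import all_boot all_order all_algebra.
From mathcomp Require Import all_classical all_reals all_analysis.
Set Implicit Arguments. Unset Strict Implicit. Unset Printing Implicit Defensive.
Import Order.TTheory GRing.Theory Num.Theory numFieldNormedType.Exports.
Local Open Scope classical_set_scope.
Local Open Scope ring_scope.

Definition locally_compact_space (X : topologicalType) : Prop :=
  forall x : X, exists2 K : set X, compact K & nbhs x K.

Definition C0plus (R : realType) (X : topologicalType) : set (X -> R) :=
  [set f : X -> R | continuous f /\ (forall x, 0 <= f x) /\
     (forall eps : R, 0 < eps ->
        exists2 K : set X, compact K & forall x, ~ K x -> `|f x| < eps)].

Definition supnorm (R : realType) (X : Type) (f : X -> R) : R :=
  sup [set `|f x| | x in [set: X]].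

Definition pk (R : realType) (X : Type) (f : X -> R) : set X :=
  [set x | f x = supnorm f].

Definition Gdelta (X : topologicalType) (K : set X) : Prop :=
  exists U : nat -> set X, (forall n, open (U n)) /\ K = \bigcap_n U n.

Definition peaks_on_compact_Gdelta (R : realType) (X : topologicalType)
  (F : set (X -> R)) : Prop :=
  forall K : set X, K !=set0 -> compact K -> Gdelta K ->
    exists2 f, F f & pk f = K.

Definition PKat (R : realType) (X : Type) (F : set (X -> R)) (x : X) :
  set (X -> R) := [set g | F g /\ g x = supnorm g].

Definition psupp (R : realType) (X Y : Type) (F : set (X -> R))
  (T : (X -> R) -> (Y -> R)) (x : X) : set Y :=
  \bigcap_(h in PKat F x) pk (T h).

(* Main.v *)
From HB Require Import structures.
From mathcomp Require Import all_boot all_order all_algebra.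
From mathcomp Require Import all_classical all_reals all_analysis.
Require Import Defs.
From mathcomp Require Import lra.
Import Order.TTheory GRing.Theory Num.Theory numFieldNormedType.Exports.
Local Open Scope classical_set_scope.
Local Open Scope ring_scope.

Lemma C0_bound {R : realType} {X : topologicalType} {g : X -> R} :
  C0plus g -> exists B : R, forall x, `|g x| <= B.
Proof.
move=> [cg [g0 gv]].
have [K cK HK] := gv 1 ltr01.
have cgK : compact (g @` K) by apply: continuous_compact => //; exact: continuous_subspaceT.
have := compact_bounded cgK.
rewrite /= /bounded_near => -[r [_ Hr]].
exists (Num.max (r + 1) 1) => x.
have [Kx|nKx] := pselect (K x).
  rewrite le_max; apply/orP; left. by apply: (Hr (r + 1)); [lra| exists x].
by rewrite le_max; apply/orP; right; apply/ltW/HK.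
Qed.

Lemma le_supnorm {R : realType} {X : Type} {g : X -> R} {B : R} x :
  (forall z, `|g z| <= B) -> `|g x| <= supnorm g.
Proof.
move=> HB; apply: sup_upper_bound; last by exists x.
split; first by exists `|g x|, x.
by exists B => _ [z _ <-].
Qed.

Lemma supnorm_le {R : realType} {X : Type} {g : X -> R} {B : R} (x : X) :
  (forall z, `|g z| <= B) -> supnorm g <= B.
Proof.
move=> HB; apply: ge_sup; first by exists `|g x|, x.
by move=> _ [z _ <-].
Qed.
Theorem mainTheorem17 (R : realType) (X Y : topologicalType)
  (hlcX : locally_compact_space X) (hHX : hausdorff_space X)
  (hlcY : locally_compact_space Y) (hHY : hausdorff_space Y)
  (F : set (X -> R)) (hF : F `<=` @C0plus R X)
  (hpeak : peaks_on_compact_Gdelta F)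
  (T : (X -> R) -> (Y -> R)) (hT : forall f, F f -> @C0plus R Y (T f))
  (hnorm : forall s : seq (X -> R), (forall f, f \in s -> F f) ->
     supnorm (fun y => \sum_(f <- s) T f y) = supnorm (fun x => \sum_(f <- s) f x)) :
  forall (x0 : X) (f : X -> R) (y : Y), F f -> psupp F T x0 y -> T f y <= f x0.
Proof.
move=> x0 f y Ff Py.
rewrite leNgt; apply/negP => lt_a.
have [cf [f0 _]] := hF _ Ff.
pose c := (f x0 + T f y) / 2.
have c1 : f x0 < c by rewrite /c; lra.
have c2 : c < T f y by rewrite /c; lra.
pose V := f @^-1` [set r | r < c].
have oV : open V by apply: open_comp; [move=> z _; exact: cf | exact: open_lt].
have [C cC nC] := hlcX x0.
pose B := ~` (V `&` C°).
have clB : closed B by apply: open_closedC; apply: openI => //; exact: open_interior.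
have nBx0 : ~ B x0 by rewrite /B /= => /(_ (conj c1 nC)).
have lcX : locally_compact [set: X].
  move=> x _; have [Cx cCx nCx] := hlcX x; exists Cx.
    by rewrite withinET.
  by split => //; exact: compact_closed.
have crs := @locally_compact_completely_regular X R lcX hHX.
have /(@uniform_separatorP _ R) [g [cg g01 gx0 gB]] := crs x0 B clB nBx0.
have g0 : g x0 = 0 by apply: gx0; exists x0.
have grange : forall x, 0 <= g x <= 1.
  move=> x; have := g01 (g x) (ex_intro2 _ _ x I erefl). by rewrite /mkset in_itv.
pose K := [set x | g x = 0].
have KV : K `<=` V `&` C°.
  move=> x Kx; apply: contrapT => nx.
  have : g x = 1 by apply: gB; exists x.
  by rewrite Kx => /eqP; rewrite eq_sym oner_eq0.
have clK : closed K.
  move=> t; apply: (@preimage_closed _ _ g [set 0]); [move=> z _; exact: cg | exact: closed_eq].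
have cK : compact K.
  apply: (subclosed_compact clK cC) => x /KV [_]; exact: interior_subset.
have gK : Gdelta K.
  exists (fun n => g @^-1` [set r | r < n.+1%:R^-1]); split.
    move=> n; apply: open_comp; [move=> z _; exact: cg | exact: open_lt].
  apply/seteqP; split.
    by move=> x Kx n _; rewrite /= Kx invr_gt0.
  move=> x Hx; apply/eqP; rewrite eq_le (andP (grange x)).1 andbT.
  rewrite leNgt; apply/negP => gp.
  have := truncnS_gt (g x)^-1; rewrite invf_plt ?posrE ?ltr0n ?invr_gt0 // => H.
  by have := lt_trans (Hx _ I) H; rewrite ltxx.
have [h Fh pkh] := hpeak K (ex_intro _ x0 g0) cK gK.
pose M := supnorm h.
have [ch [h0 hv]] := hF _ Fh.
have [Bh HBh] := C0_bound (hF _ Fh).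
have hle : forall x, h x <= M.
  by move=> x; have := le_supnorm x HBh; rewrite ger0_norm.
have hx0 : h x0 = M by have : pk h x0 by rewrite pkh.
have PKh : PKat F x0 h by split.
have Thy : T h y = supnorm (T h) := Py h PKh.
have hn1 : supnorm (T h) = M.
  have := hnorm [:: h] (fun g => ltac:(by rewrite inE => /eqP ->)).
  have -> : (fun y => \sum_(g <- [:: h]) T g y) = T h by apply/funext => z; rewrite big_seq1.
  by have -> : (fun x => \sum_(g <- [:: h]) g x) = h by apply/funext => z; rewrite big_seq1.
have [d d0 Hd] : exists2 d, 0 < d & forall x, ~ V x -> h x <= M - d.
  case: (leP M 0) => M0.
    exists 1 => // x nVx; exfalso.
    have hxM : h x = M by apply/eqP; rewrite eq_le hle /=; exact: le_trans M0 (h0 x).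
    have : K x by rewrite -pkh.
    by move=> /KV [].
  have M20 : 0 < M / 2 by rewrite divr_gt0.
  have [K' cK' HK'] := hv (M / 2) M20.
  pose E := h @` (K' `&` ~` V).
  have cE : compact E.
    apply: continuous_compact; first exact: continuous_subspaceT.
    by apply: compact_closedI => //; exact: open_closedC.
  have clE : closed E by apply: compact_closed => //; exact: Rhausdorff.
  have nEM : ~ E M.
    case=> x [_ nVx] hxM.
    have : K x by rewrite -pkh.
    by move=> /KV [].
  have : open (~` E) by exact: closed_openC.
  rewrite openE => /(_ M nEM); rewrite /interior => /nbhs_ballP [e e0 He].
  exists (Num.min e (M / 2)); first by rewrite lt_min e0 M20.
  have m1 : Num.min e (M / 2) <= e by rewrite ge_min lexx.
  have m2 : Num.min e (M / 2) <= M / 2 by rewrite ge_min lexx orbT.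
  move=> x nVx.
  case: (pselect (K' x)) => K'x.
    have : ~ ball M e (h x) by move=> /He; apply; exists x.
    rewrite /ball /= ger0_norm ?subr_ge0 ?hle // => /negP; rewrite -leNgt => H.
    lra.
  have := HK' x K'x; rewrite ger0_norm // => H.
  lra.
have [Bf HBf] := C0_bound (hF _ Ff).
pose Bf' := Num.max Bf 0.
have Bf'0 : 0 <= Bf' by rewrite le_max lexx orbT.
have HBf' : forall z, f z <= Bf'.
  move=> z; rewrite le_max; apply/orP; left.
  by have := HBf z; rewrite ger0_norm.
have := truncnS_gt (Bf' / d); set n := (Num.truncn _).+1 => Hn.
have Hn' : Bf' < n%:R * d by rewrite -ltr_pdivrMr.
pose s := nseq n h ++ [:: f].
have hs : forall k, k \in s -> F k.
  by move=> k; rewrite mem_cat mem_nseq inE => /orP [/andP [_ /eqP->]| /eqP->].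
have E := hnorm s hs.
have eL : (fun y => \sum_(k <- s) T k y) = (fun y => T h y *+ n + T f y).
  by apply/funext => z; rewrite big_cat big_nseq iter_addr_0 big_seq1.
have eR : (fun x => \sum_(k <- s) k x) = (fun x => h x *+ n + f x).
  by apply/funext => z; rewrite big_cat big_nseq iter_addr_0 big_seq1.
rewrite eL eR in E.
have [Bth HBth] := C0_bound (hT _ Fh).
have [Btf HBtf] := C0_bound (hT _ Ff).
have [_ [Th0 _]] := hT _ Fh.
have [_ [Tf0 _]] := hT _ Ff.
have lb : T h y *+ n + T f y <= supnorm (fun y => T h y *+ n + T f y).
  have := @le_supnorm _ _ (fun y => T h y *+ n + T f y) (Bth *+ n + Btf) y.
  rewrite ger0_norm ?addr_ge0 ?mulrn_wge0 //; apply => z.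
  apply: le_trans (ler_normD _ _) _; rewrite normrMn.
  by apply: lerD => //; rewrite lerMn2r HBth orbT.
have c0 : 0 < c by apply: le_lt_trans c1; exact: f0.
have ub : supnorm (fun x => h x *+ n + f x) <= M *+ n + c.
  apply: (supnorm_le x0) => z.
  rewrite ger0_norm ?addr_ge0 ?mulrn_wge0 //.
  case: (pselect (V z)) => Vz.
    have : h z *+ n <= M *+ n by rewrite lerMn2r hle orbT.
    rewrite /V /= in Vz; lra.
  have : h z *+ n <= (M - d) *+ n by rewrite lerMn2r Hd ?orbT.
  have := HBf' z.
  move: Hn'; rewrite mulr_natl mulrnBl; lra.
rewrite Thy hn1 E in lb.
have := le_trans lb ub.
by rewrite lerD2l leNgt c2.
Qed.
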